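(* Let $d \geq 3$. Then the morphism \[\mathbb{P}^1\times\mathbb{P}^1 \to \mathbb{P}^4,\quad [x_0:x_1]\times[y_0:y_1] \mapsto \Big[x_0y_0^d : d x_0y_0^{d-1}y_1 + x_1y_0^d : \tbinom{d}{2}x_0y_0^{d-2}y_1^2 + d x_1y_0^{d-1}y_1 : x_0y_1^d + d x_1y_0y_1^{d-1} : x_1y_1^d\Big]\] is injective. In particular, $\operatorname{injdim}(\mathbb{P}^1\times\mathbb{P}^1,\mathcal{O}(1,d)) \leq 4$.
   Context: Over $\mathbb{C}$. For a line bundle $\mathscr{L}$ on a projective variety $X$ and a nonzero subspace $V \subseteq H^0(X,\mathscr{L})$, $\varphi_V \colon X \dashrightarrow \mathbb{P}(V^* )$ is the rational map given by the sections in $V$; $\operatorname{injdim}(X,\mathscr{L}) := \inf\{\dim V - 1 : \varphi_V \text{ is an injective morphism}\}$. *)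

(* Defs.v *)
From HB Require Import structures.
From mathcomp Require Import all_boot all_order all_algebra.
From mathcomp Require Import complex.
From mathcomp Require Import Rstruct.
Set Implicit Arguments. Unset Strict Implicit. Unset Printing Implicit Defensive.
Import Order.TTheory GRing.Theory Num.Theory.
Local Open Scope ring_scope.

Definition C : fieldType := (Rdefinitions.R)[i].

(* Homogeneous coordinate vectors; a point of P^n is a nonzero vector of
   C^(n+1) up to nonzero scaling. *)
Definition proj_eq (n : nat) (u v : 'rV[C]_n) : Prop :=
  exists c : C, c != 0 /\ u = c *: v.

Definition phi_d (d : nat) (x y : 'rV[C]_2) : 'rV[C]_5 :=
  let x0 := x 0 0 in let x1 := x 0 1 in
  let y0 := y 0 0 in let y1 := y 0 1 in
  \row_(k < 5)
    match val k with
    | 0 => x0 * y0 ^+ d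
    | 1 => d%:R * x0 * y0 ^+ (d - 1) * y1 + x1 * y0 ^+ d
    | 2 => 'C(d, 2)%:R * x0 * y0 ^+ (d - 2) * y1 ^+ 2
           + d%:R * x1 * y0 ^+ (d - 1) * y1
    | 3 => x0 * y1 ^+ d + d%:R * x1 * y0 * y1 ^+ (d - 1)
    | _ => x1 * y1 ^+ d
    end.

(* H^0(P^1 x P^1, O(1,d)) = bihomogeneous forms of bidegree (1,d) in
   (x0,x1 ; y0,y1); a form is encoded by its coefficient matrix s, with
   s i j the coefficient of x_i * y0^(d-j) * y1^j. *)
Definition section (d : nat) := 'M[C]_(2, d.+1).

Definition eval_section (d : nat) (s : section d) (x y : 'rV[C]_2) : C :=
  \sum_(i < 2) \sum_(j < d.+1)
     s i j * x 0 i * (y 0 0) ^+ (d - j) * (y 0 1) ^+ j.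

(* The map phi_V given by a basis of V (any other basis changes phi_V by a
   linear automorphism of the target projective space). *)
Definition phi_V (d : nat) (V : {vspace section d}) (x y : 'rV[C]_2)
  : 'rV[C]_(\dim V) :=
  \row_(k < \dim V) eval_section (vbasis V)`_k x y.

(* phi_V is an injective morphism: it has no base points on P^1 x P^1 and
   it is injective on points. *)
Definition injective_morphism (n : nat)
  (f : 'rV[C]_2 -> 'rV[C]_2 -> 'rV[C]_n) : Prop :=
  (forall x y, x != 0 -> y != 0 -> f x y != 0) /\
  (forall x y x' y', x != 0 -> y != 0 -> x' != 0 -> y' != 0 ->
     proj_eq (f x y) (f x' y') -> proj_eq x x' /\ proj_eq y y').

(* injdim(P^1 x P^1, O(1,d)) <= N, i.e. the infimum of dim V - 1 over the
   nonzero subspaces V with phi_V an injective morphism is at most N. *)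
Definition injdim_P1P1_le (d N : nat) : Prop :=
  exists V : {vspace section d},
    V != 0%VS /\ ((\dim V).-1 <= N)%N /\ injective_morphism (phi_V V).

(* Main.v *)
Require Import Defs.
From mathcomp Require Import all_boot all_order all_algebra.
From mathcomp Require Import complex ring Rstruct.
Import GRing.Theory Num.Theory.
Set Implicit Arguments. Unset Strict Implicit.
Local Open Scope ring_scope.

Lemma natC_neq0 (n : nat) : (n.+1)%:R != 0 :> C.
Proof. exact: (negbT (@pnatr_eq0 (Rdefinitions.R[i]) n.+1)). Qed.

Lemma eq_diff (x y z : C) : x = y -> z = x - y -> z = 0.
Proof. by move=> -> ->; rewrite subrr. Qed.

Lemma comb (u v z k l : C) : u = 0 -> v = 0 -> z = k * u - l * v -> z = 0.
Proof. by move=> -> -> ->; rewrite !mulr0 subrr. Qed.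

Lemma binC (n : nat) : 'C(n.+3, 2)%:R = (n.+3)%:R * (n.+2)%:R / 2 :> C.
Proof.
have h : ('C(n.+3, 2) * 2 = n.+3 * n.+2)%N.
  by rewrite mulnC -mul_bin_diag bin1.
apply: (mulIf (natC_neq0 1)); rewrite mulfVK; last exact: natC_neq0 1.
by rewrite -!natrM h.
Qed.

Lemma aff n (a b a' b' t t' mu T T' : C) :
 mu != 0 -> (a != 0) || (b != 0) -> T = t ^+ n.+2 -> T' = t' ^+ n.+2 ->
 a = mu * a' ->
 (n.+3)%:R * a * t + b = mu * ((n.+3)%:R * a' * t' + b') ->
 'C(n.+3, 2)%:R * a * t ^+ 2 + (n.+3)%:R * b * t
   = mu * ('C(n.+3, 2)%:R * a' * t' ^+ 2 + (n.+3)%:R * b' * t') ->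
 a * (t * T) + (n.+3)%:R * b * T = mu * (a' * (t' * T') + (n.+3)%:R * b' * T') ->
 b * (t * T) = mu * (b' * (t' * T')) -> t = t'.
Proof.
move=> mu0 ab HT HT' g0 g1 g2 g3 g4.
have D0 : (n.+3)%:R != 0 :> C := natC_neq0 n.+2.
have two0 : 2%:R != 0 :> C := natC_neq0 1.
have hC0 := binC n.
move: g2 hC0; generalize ('C(n.+3, 2)%:R : C) => Cd g2 hC0.
have Hb : b = mu * ((n.+3)%:R * a' * (t' - t) + b').
  have -> : mu * ((n.+3)%:R * a' * (t' - t) + b')
     = mu * ((n.+3)%:R * a' * t' + b') - (n.+3)%:R * (mu * a') * t by ring.
  by rewrite -g1 g0; ring.
subst a b.
have [a'0|a'n0] := eqVneq a' 0.
  subst a'; move: ab; rewrite mulr0 eqxx /= !mulr0 mul0r add0r => hb.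
  have K : mu * (n.+3)%:R * b' * (t - t') = 0.
    by apply: (eq_diff g2); ring.
  move/eqP: K; rewrite !mulf_eq0 (negbTE mu0) (negbTE D0) /=.
  move: hb; rewrite mulf_eq0 negb_or => /andP[_ /negbTE ->] /=.
  by rewrite subr_eq0 => /eqP.
have K : mu * (t - t') * (Cd * a' * (t + t') + (n.+3)%:R * b'
            - (n.+3)%:R * (n.+3)%:R * a' * t) = 0.
  by apply: (eq_diff g2); ring.
have [tt|tt] := eqVneq t t'; first done.
move/eqP: K; rewrite !mulf_eq0 (negbTE mu0) subr_eq0 (negbTE tt) /= => /eqP K.
have hC : Cd * 2 - (n.+3)%:R * (n.+2)%:R = 0 :> C.
  by rewrite hC0 (mulfVK two0) subrr.
have e0 : 2 * b' - a' * ((n.+4)%:R * t - (n.+2)%:R * t') = 0.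
  apply: (mulfI D0); rewrite mulr0.
  by apply: (comb (k:=2) (l:=a'*(t+t')) K hC); ring.
have E3 : (n.+3)%:R * t' * T - (n.+1)%:R * t * T - ((n.+3)%:R * t - (n.+1)%:R * t') * T' = 0.
  have : mu * a' * (n.+4)%:R * ((n.+3)%:R * t' * T - (n.+1)%:R * t * T
            - ((n.+3)%:R * t - (n.+1)%:R * t') * T') = 0.
    have g3' := eq_diff g3 (erefl _).
    by apply: (comb (k:=2) (l:=mu*(n.+3)%:R*(T-T')) g3' e0); ring.
  move/eqP; rewrite !mulf_eq0 (negbTE mu0) (negbTE a'n0) (negbTE (natC_neq0 n.+3)) /=.
  by move/eqP.
have E4 : ((n.+4)%:R * t' - (n.+2)%:R * t) * t * T - ((n.+4)%:R * t - (n.+2)%:R * t') * t' * T' = 0.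
  have : mu * a' * (((n.+4)%:R * t' - (n.+2)%:R * t) * t * T - ((n.+4)%:R * t - (n.+2)%:R * t') * t' * T') = 0.
    have g4' := eq_diff g4 (erefl _).
    by apply: (comb (k:=2) (l:=mu*(t*T-t'*T')) g4' e0); ring.
  move/eqP; rewrite !mulf_eq0 (negbTE mu0) (negbTE a'n0) /=.
  by move/eqP.
have F : (n.+2)%:R * (n.+3)%:R * (t - t') ^+ 3 * T' = 0.
  apply: (comb (k:=((n.+4)%:R * t' - (n.+2)%:R * t)*t) (l:=(n.+3)%:R * t' - (n.+1)%:R * t) E3 E4); ring.
move/eqP: F; rewrite !mulf_eq0 (negbTE D0) (negbTE (natC_neq0 n.+1)) /=.
case/orP => [|/eqP T'0].
  by rewrite !orbb subr_eq0 => /eqP.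
move: HT'; rewrite T'0 => /esym/eqP; rewrite expf_eq0 /= => /eqP t'0.
subst t'; move: E3; rewrite T'0 !(mulr0, mul0r, subr0, sub0r) => /eqP.
rewrite oppr_eq0 HT -mulrA -exprS mulf_eq0 (negbTE (natC_neq0 n)) /= expf_eq0 /=.
by move=> /eqP.
Qed.

Section Comps.
Variables (n : nat) (x y : 'rV[C]_2).
Local Notation D := ((n.+3)%:R : C).
Lemma phi0 : (phi_d n.+3 x y) 0 (@Ordinal 5 0 isT) = x 0 0 * y 0 0 ^+ n.+3.
Proof. by rewrite mxE. Qed.
Lemma phi1 : (phi_d n.+3 x y) 0 (@Ordinal 5 1 isT)
  = D * x 0 0 * y 0 0 ^+ n.+2 * y 0 1 + x 0 1 * y 0 0 ^+ n.+3.
Proof. by rewrite mxE /= subn1. Qed.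
Lemma phi2 : (phi_d n.+3 x y) 0 (@Ordinal 5 2 isT)
  = 'C(n.+3, 2)%:R * x 0 0 * y 0 0 ^+ n.+1 * y 0 1 ^+ 2 + D * x 0 1 * y 0 0 ^+ n.+2 * y 0 1.
Proof. by rewrite mxE /= subn1 subn2. Qed.
Lemma phi3 : (phi_d n.+3 x y) 0 (@Ordinal 5 3 isT)
  = x 0 0 * y 0 1 ^+ n.+3 + D * x 0 1 * y 0 0 * y 0 1 ^+ n.+2.
Proof. by rewrite mxE /= subn1. Qed.
Lemma phi4 : (phi_d n.+3 x y) 0 (@Ordinal 5 4 isT) = x 0 1 * y 0 1 ^+ n.+3.
Proof. by rewrite mxE. Qed.
End Comps.

Section CompsA.
Variables (n : nat) (x y : 'rV[C]_2) (t : C).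
Hypothesis Hy : y 0 1 = t * y 0 0.
Local Notation D := ((n.+3)%:R : C).
Local Notation P := (y 0 0 ^+ n.+3).
Lemma phiA0 : (phi_d n.+3 x y) 0 (@Ordinal 5 0 isT) = P * x 0 0.
Proof. by rewrite phi0 mulrC. Qed.
Lemma phiA1 : (phi_d n.+3 x y) 0 (@Ordinal 5 1 isT) = P * (D * x 0 0 * t + x 0 1).
Proof. rewrite phi1 Hy !exprS; ring. Qed.
Lemma phiA2 : (phi_d n.+3 x y) 0 (@Ordinal 5 2 isT)
   = P * ('C(n.+3, 2)%:R * x 0 0 * t ^+ 2 + D * x 0 1 * t).
Proof. rewrite phi2 Hy; generalize ('C(n.+3, 2)%:R : C) => Cd; rewrite !exprMn !exprS; ring. Qed.
Lemma phiA3 : (phi_d n.+3 x y) 0 (@Ordinal 5 3 isT)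
   = P * (x 0 0 * (t * t ^+ n.+2) + D * x 0 1 * t ^+ n.+2).
Proof. rewrite phi3 Hy !exprMn !exprS; ring. Qed.
Lemma phiA4 : (phi_d n.+3 x y) 0 (@Ordinal 5 4 isT) = P * (x 0 1 * (t * t ^+ n.+2)).
Proof. rewrite phi4 Hy !exprMn !exprS; ring. Qed.
End CompsA.

Lemma row2P (u v : 'rV[C]_2) (k : C) :
  u 0 0 = k * v 0 0 -> u 0 1 = k * v 0 1 -> u = k *: v.
Proof.
move=> h0 h1; apply/rowP => j; rewrite mxE.
case: j => [[|[|//]] Hj].
  by rewrite (_ : Ordinal Hj = 0); [exact: h0 | exact: val_inj].
by rewrite (_ : Ordinal Hj = 1); [exact: h1 | exact: val_inj].
Qed.

Lemma row2_0 (u : 'rV[C]_2) : u 0 0 = 0 -> u 0 1 = 0 -> u = 0.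
Proof.
move=> h0 h1; rewrite (@row2P u u 0) ?scale0r //.
  by rewrite mul0r.
by rewrite mul0r.
Qed.

Lemma row2_neq0 (u : 'rV[C]_2) : u != 0 -> (u 0 0 != 0) || (u 0 1 != 0).
Proof.
move=> un; rewrite -negb_and; apply/negP => /andP[/eqP h0 /eqP h1].
by move: un; rewrite (row2_0 h0 h1) eqxx.
Qed.

Lemma mul_pow0 (a b : C) k : b != 0 -> a * b ^+ k = 0 -> a = 0.
Proof.
move=> bn /eqP; rewrite mulf_eq0 expf_eq0 (negbTE bn) andbF orbF.
by move/eqP.
Qed.

Lemma solve_mu (a a' c P P' : C) : P != 0 -> P * a = c * (P' * a') -> a = c * P' / P * a'.
Proof.
move=> Pn h; apply: (mulfI Pn); rewrite h.
have -> : P * (c * P' / P * a') = (P / P) * (c * (P' * a')) by ring.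
by rewrite divff // mul1r.
Qed.

Lemma cmul0 (c a : C) : c != 0 -> 0 = c * a -> a = 0.
Proof. by move=> cn /esym/eqP; rewrite mulf_eq0 (negbTE cn) /= => /eqP. Qed.

Lemma bpf n (x y : 'rV[C]_2) : x != 0 -> y != 0 -> phi_d n.+3 x y != 0.
Proof.
move=> xn yn; apply/eqP => H.
have c k : (phi_d n.+3 x y) 0 k = 0 by rewrite H mxE.
have := c (@Ordinal 5 0 isT); have := c (@Ordinal 5 1 isT).
have := c (@Ordinal 5 3 isT); have := c (@Ordinal 5 4 isT).
rewrite phi0 phi1 phi3 phi4 => E4 E3 E1 E0.
have [y00|y0n] := eqVneq (y 0 0) 0.
  have y1n : y 0 1 != 0.
    by apply/eqP => y01; move: yn; rewrite (row2_0 y00 y01) eqxx.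
  have x1 := mul_pow0 y1n E4.
  move: E3; rewrite x1 y00 !(mulr0, mul0r, addr0) => E3.
  have x0 := mul_pow0 y1n E3.
  by move: xn; rewrite (row2_0 x0 x1) eqxx.
have x0 := mul_pow0 y0n E0.
move: E1; rewrite x0 !(mulr0, mul0r, add0r) => E1.
have x1 := mul_pow0 y0n E1.
by move: xn; rewrite (row2_0 x0 x1) eqxx.
Qed.

Lemma injp n (x y x' y' : 'rV[C]_2) : x != 0 -> y != 0 -> x' != 0 -> y' != 0 ->
  proj_eq (phi_d n.+3 x y) (phi_d n.+3 x' y') -> proj_eq x x' /\ proj_eq y y'.
Proof.
move=> xn yn xn' yn' [c [cn H]].
have cE k : (phi_d n.+3 x y) 0 k = c * (phi_d n.+3 x' y') 0 k by rewrite H mxE.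
have [y00|y0n] := eqVneq (y 0 0) 0; have [y00'|y0n'] := eqVneq (y' 0 0) 0.
- have y1n : y 0 1 != 0.
    by apply/eqP => y01; move: yn; rewrite (row2_0 y00 y01) eqxx.
  have y1n' : y' 0 1 != 0.
    by apply/eqP => y01; move: yn'; rewrite (row2_0 y00' y01) eqxx.
  have := cE (@Ordinal 5 3 isT); have := cE (@Ordinal 5 4 isT).
  rewrite !phi3 !phi4 y00 y00' !(mulr0, mul0r, addr0) => E4 E3.
  have P0 : y 0 1 ^+ n.+3 != 0 by rewrite expf_neq0.
  have P0' : y' 0 1 ^+ n.+3 != 0 by rewrite expf_neq0.
  split.
    exists (c * y' 0 1 ^+ n.+3 / y 0 1 ^+ n.+3); split.
      by rewrite mulf_neq0 ?invr_neq0 // mulf_neq0.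
    apply: row2P; apply: solve_mu.
    + exact: P0.
    + by rewrite [LHS]mulrC E3 [_ * x' 0 0]mulrC.
    + exact: P0.
    + by rewrite [LHS]mulrC E4 [_ * x' 0 1]mulrC.
  exists (y 0 1 / y' 0 1); split.
    by rewrite mulf_neq0 ?invr_neq0.
  apply: row2P; first by rewrite y00 y00' mulr0.
  by rewrite divfK.
- have := cE (@Ordinal 5 0 isT); have := cE (@Ordinal 5 1 isT).
  rewrite phi0 phi1 phi0 phi1 y00 !(expr0n, mulr0, mul0r, addr0, add0r) /= => E1 E0.
  have x0 := mul_pow0 y0n' (cmul0 cn E0).
  move: E1; rewrite x0 !(mulr0, mul0r, add0r) => /(cmul0 cn) /(mul_pow0 y0n') x1.
  by move: xn'; rewrite (row2_0 x0 x1) eqxx.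
- have := cE (@Ordinal 5 0 isT); have := cE (@Ordinal 5 1 isT).
  rewrite phi0 phi1 phi0 phi1 y00' !(expr0n, mulr0, mul0r, addr0, add0r) /= => E1 E0.
  have x0 := mul_pow0 y0n E0.
  move: E1; rewrite x0 !(mulr0, mul0r, add0r) => /(mul_pow0 y0n) x1.
  by move: xn; rewrite (row2_0 x0 x1) eqxx.
- set t := y 0 1 / y 0 0; set t' := y' 0 1 / y' 0 0.
  have Hy : y 0 1 = t * y 0 0 by rewrite /t divfK.
  have Hy' : y' 0 1 = t' * y' 0 0 by rewrite /t' divfK.
  clearbody t t'.
  have P0 : y 0 0 ^+ n.+3 != 0 by rewrite expf_neq0.
  have P0' : y' 0 0 ^+ n.+3 != 0 by rewrite expf_neq0.
  have := cE (@Ordinal 5 0 isT); rewrite !phiA0 => /(solve_mu P0) g0.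
  have := cE (@Ordinal 5 1 isT); rewrite (phiA1 n x Hy) (phiA1 n x' Hy') => /(solve_mu P0) g1.
  have := cE (@Ordinal 5 2 isT); rewrite (phiA2 n x Hy) (phiA2 n x' Hy') => /(solve_mu P0) g2.
  have := cE (@Ordinal 5 3 isT); rewrite (phiA3 n x Hy) (phiA3 n x' Hy') => /(solve_mu P0) g3.
  have := cE (@Ordinal 5 4 isT); rewrite (phiA4 n x Hy) (phiA4 n x' Hy') => /(solve_mu P0) g4.
  move: g0 g1 g2 g3 g4; set mu := c * _ / _ => g0 g1 g2 g3 g4.
  have mun : mu != 0 by rewrite /mu mulf_neq0 ?invr_neq0 // mulf_neq0.
  have tt := aff mun (row2_neq0 xn) (erefl _) (erefl _) g0 g1 g2 g3 g4.
  subst t'.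
  split.
    exists mu; split => //.
    apply: row2P => //.
    have -> : x 0 1 = mu * ((n.+3)%:R * x' 0 0 * t + x' 0 1) - (n.+3)%:R * x 0 0 * t.
      by rewrite -g1; ring.
    by rewrite g0; ring.
  exists (y 0 0 / y' 0 0); split.
    by rewrite mulf_neq0 ?invr_neq0.
  apply: row2P; first by rewrite divfK.
  by rewrite Hy Hy' mulrCA divfK.
Qed.

Lemma evalZD d (a : C) (s s' : section d) x y :
  eval_section (a *: s + s') x y = a * eval_section s x y + eval_section s' x y.
Proof.
rewrite /eval_section mulr_sumr -big_split; apply: eq_bigr => i _.
rewrite mulr_sumr -big_split; apply: eq_bigr => j _.
rewrite !mxE; generalize (y 0 0 ^+ (d - j)) (y 0 1 ^+ j) => u v.
by rewrite !mulrDl !mulrA.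
Qed.

Lemma eval0 d x y : eval_section (0 : section d) x y = 0.
Proof.
rewrite /eval_section big1 // => i _; rewrite big1 // => j _.
by rewrite mxE !mul0r.
Qed.

Lemma evalD d (s s' : section d) x y :
  eval_section (s + s') x y = eval_section s x y + eval_section s' x y.
Proof. by rewrite -[s]scale1r evalZD mul1r scale1r. Qed.

Lemma evalZ d (a : C) (s : section d) x y :
  eval_section (a *: s) x y = a * eval_section s x y.
Proof. by rewrite -[a *: s]addr0 evalZD eval0 addr0. Qed.

Lemma eval_sum d m (F : 'I_m -> section d) x y :
  eval_section (\sum_(i < m) F i) x y = \sum_(i < m) eval_section (F i) x y.
Proof.
apply: (big_morph (fun s => eval_section s x y)).
  by move=> s s'; rewrite evalD.
exact: eval0.
Qed.

Lemma eval_delta d (i0 : 'I_2) (j0 : 'I_d.+1) x y :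
  eval_section (delta_mx i0 j0 : section d) x y
    = x 0 i0 * y 0 0 ^+ (d - j0) * y 0 1 ^+ j0.
Proof.
rewrite /eval_section (bigD1 i0) //= (bigD1 j0) //= !mxE !eqxx /= mul1r.
rewrite big1 => [|j /negbTE nj]; last by rewrite mxE eqxx nj /= !mul0r.
rewrite addr0 big1 => [|i /negbTE ni]; first by rewrite addr0.
by rewrite big1 // => j _; rewrite mxE ni /= !mul0r.
Qed.

Definition sec n (k : 'I_5) : section n.+3 :=
  match val k with
  | 0 => delta_mx 0 0
  | 1 => (n.+3)%:R *: delta_mx 0 (inord 1) + delta_mx 1 0
  | 2 => 'C(n.+3, 2)%:R *: delta_mx 0 (inord 2) + (n.+3)%:R *: delta_mx 1 (inord 1)
  | 3 => delta_mx 0 ord_max + (n.+3)%:R *: delta_mx 1 (inord n.+2)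
  | _ => delta_mx 1 ord_max
  end.

Lemma eval_sec n k x y : eval_section (sec n k) x y = (phi_d n.+3 x y) 0 k.
Proof.
rewrite mxE /sec.
case: k => [[|[|[|[|[|//]]]]] Hk] /=.
- by rewrite eval_delta /= subn0 expr0 mulr1.
- rewrite evalZD !eval_delta !inordK //= subn0 subn1 /= expr0 expr1 !mulr1 !mulrA.
  done.
- rewrite evalZD evalZ !eval_delta !inordK //= subn1 subn2 /= expr1 !mulrA.
  done.
- rewrite evalD evalZ !eval_delta !inordK //= subnn subn1 (_ : (n.+3 - n.+2 = 1)%N); last by rewrite subSnn.
  by rewrite expr0 expr1 mulr1 !mulrA.
- by rewrite eval_delta /= subnn expr0 mulr1.
Qed.

Lemma eval_lin d (V : {vspace section d}) (s : section d) x y x' y' (c : C) :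
  s \in V -> phi_V V x y = c *: phi_V V x' y' ->
  eval_section s x y = c * eval_section s x' y'.
Proof.
move=> sV H.
have e (i : 'I_(\dim V)) : eval_section (vbasis V)`_i x y = c * eval_section (vbasis V)`_i x' y'.
  by have := congr1 (fun M : 'rV[C]_(\dim V) => M 0 i) H; rewrite !mxE.
rewrite (coord_vbasis sV) !eval_sum mulr_sumr; apply: eq_bigr => i _.
by rewrite !evalZ e mulrCA.
Qed.

Definition secV n : {vspace section n.+3} := <<[seq sec n k | k <- enum 'I_5]>>%VS.

Lemma sec_in n k : sec n k \in secV n.
Proof. by apply: memv_span; apply: map_f; rewrite mem_enum. Qed.

Unset Implicit Arguments.
Theorem proposition4p3 (d : nat) (hd : (3 <= d)%N) :
  injective_morphism (phi_d d) /\ injdim_P1P1_le d 4.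
Proof.
case: d hd => [|[|[|n]]] // _.
have IM : injective_morphism (phi_d n.+3).
  split; [exact: bpf | exact: injp].
split => //.
exists (secV n); split.
  apply/eqP => V0.
  have := sec_in n (@Ordinal 5 0 isT); rewrite V0 memv0 /sec /= => /eqP/matrixP/(_ 0 0).
  by rewrite !mxE !eqxx /=; apply/eqP; exact: oner_neq0.
split.
  have := dim_span [seq sec n k | k <- enum 'I_5].
  rewrite size_map size_enum_ord.
  by case: (\dim _).
split.
  move=> x y xn yn; apply/eqP => H.
  have : phi_d n.+3 x y = 0.
    apply/rowP => k; rewrite [RHS]mxE -eval_sec.
    rewrite (@eval_lin _ (secV n) _ x y x y 0) ?sec_in ?mul0r //.
    by rewrite H scale0r.
  by apply/eqP; exact: bpf.
move=> x y x' y' xn yn xn' yn' [c [cn H]].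
apply: injp => //; exists c; split => //.
apply/rowP => k; rewrite [RHS]mxE -!eval_sec.
exact: (eval_lin (sec_in n k) H).
Qed.
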